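(* Let $\mathbb{A}=S^1\times\mathbb{R}$ and let $T:\mathbb{A}\to\mathbb{A}$ be an exact symplectic map which is a twist map with respect to two sets of symplectic coordinates $(q,p)$ and $(x,y)$ on $\mathbb{A}$, with $C^2$ generating functions $H(q,q')$ and $G(x,x')$ respectively, satisfying $H_{12}>0$ and $G_{12}>0$. Assume the geometric assumption: for every $z\in\mathcal{M}_H$ the vector $\frac{\partial}{\partial y}(z)$ lies in the cone $N_H(z)$, and for every $z\in\mathcal{M}_G$ the vector $\frac{\partial}{\partial p}(z)$ lies in the cone $N_G(z)$. Then $\mathcal{M}_H=\mathcal{M}_G$.
   Context: Subscripts $1,2$ denote partial derivatives in the first/second variable. ''Symplectic coordinates'' means both coordinate systems induce the same symplectic form ($dq\wedge dp=dx\wedge dy$). Generating function convention (on lifts): $T(q,p)=(q',p')$ iff $p=-H_1(q,q')$, $p'=H_2(q,q')$; similarly $T(x,y)=(x',y')$ iff $y=-G_1(x,x')$, $y'=G_2(x,x')$. For $H$: a configuration is a sequence $\{q_n\}_{n\in\mathbb Z}$ with $H_2(q_{n-1},q_n)+H_1(q_n,q_{n+1})=0$ for all $n$ (equivalently, the $q$-coordinates of an orbit $\{(q_n,p_n)\}$ of $T$). It is an m-configuration if for any integers $M<N$ the segment $(q_{M+1},\dots,q_{N-1})$ is a local maximum of $\sum_{n=M}^{N-1}H(x_n,x_{n+1})$ with fixed end points $x_M=q_M$, $x_N=q_N$; the corresponding orbit is an m-orbit, and $\mathcal{M}_H\subseteq\mathbb{A}$ denotes the set swept by all m-orbits for $H$.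 Analogously $\mathcal{M}_G$ is defined using $G$ and the coordinates $(x,y)$. Cones: for a point $z=(q_0,p_0)$ with orbit $\{(q_n,p_n)\}$ satisfying $H_{22}(q_{-1},q_0)<-H_{11}(q_0,q_1)$ (this holds at every point of $\mathcal{M}_H$), write tangent vectors in $T_z\mathbb{A}$ as $(\delta q,\delta p)$; the two lines through the origin with slopes $-H_{11}(q_0,q_1)$ and $H_{22}(q_{-1},q_0)$ divide $T_z\mathbb{A}$ into four cones, denoted $N_H,W_H,S_H,E_H$ in clockwise order, where $N_H$ is the one containing the vertical vector $\frac{\partial}{\partial p}$; explicitly $N_H=\{(\delta q,\delta p):\delta p>\max(-H_{11}(q_0,q_1)\delta q,\ H_{22}(q_{-1},q_0)\delta q)\}$. The cone $N_G$ is defined analogously using $G$, the coordinates $(x,y)$ and the vertical vector $\frac{\partial}{\partial y}$. *)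

(* Defs.v *)
From Stdlib Require Import Reals ZArith.
From Coquelicot Require Import Coquelicot.
Open Scope R_scope.

Definition pd1 (f : R -> R -> R) (a b : R) : R := Derive (fun t => f t b) a.
Definition pd2 (f : R -> R -> R) (a b : R) : R := Derive (fun t => f a t) b.

Definition jcont (f : R -> R -> R) : Prop :=
  forall a b eps, 0 < eps -> exists delta, 0 < delta /\
    forall a' b', Rabs (a' - a) < delta -> Rabs (b' - b) < delta ->
      Rabs (f a' b' - f a b) < eps.

Definition isC1 (f : R -> R -> R) : Prop :=
  (forall a b, ex_derive (fun t => f t b) a /\ ex_derive (fun t => f a t) b)
  /\ jcont f /\ jcont (pd1 f) /\ jcont (pd2 f).

Definition isC2 (f : R -> R -> R) : Prop := isC1 f /\ isC1 (pd1 f) /\ isC1 (pd2 f).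

Definition cp1 (Phi : R * R -> R * R) (a b : R) : R := fst (Phi (a, b)).
Definition cp2 (Phi : R * R -> R * R) (a b : R) : R := snd (Phi (a, b)).

Fixpoint action (H : R -> R -> R) (x : Z -> R) (M : Z) (L : nat) : R :=
  match L with
  | O => 0
  | S L' => action H x M L' + H (x (M + Z.of_nat L')%Z) (x (M + Z.of_nat L' + 1)%Z)
  end.

Definition is_config (H : R -> R -> R) (q : Z -> R) : Prop :=
  forall n : Z, pd2 H (q (n - 1)%Z) (q n) + pd1 H (q n) (q (n + 1)%Z) = 0.

Definition is_mconfig (H : R -> R -> R) (q : Z -> R) : Prop :=
  is_config H q /\
  forall M N : Z, (M < N)%Z ->
    exists eps, 0 < eps /\
      forall x : Z -> R, x M = q M -> x N = q N ->
        (forall n : Z, (M < n < N)%Z -> Rabs (x n - q n) < eps) ->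
        action H x M (Z.to_nat (N - M)) <= action H q M (Z.to_nat (N - M)).

(* The set swept by all m-orbits, as a (translation-saturated) subset of the
   lift R^2 of the annulus: points (q_n + j, p_n), p_n = -H_1(q_n+j, q_{n+1}+j). *)
Definition swept (H : R -> R -> R) (z : R * R) : Prop :=
  exists q : Z -> R, is_mconfig H q /\
    exists n j : Z,
      z = (q n + IZR j, - pd1 H (q n + IZR j) (q (n + 1)%Z + IZR j)).

Definition in_N (H : R -> R -> R) (qm q0 q1 : R) (v : R * R) : Prop :=
  snd v > Rmax (- pd1 (pd1 H) q0 q1 * fst v) (pd2 (pd2 H) qm q0 * fst v).

(* Main.v *)
Require Import Defs.
From Stdlib Require Import Reals ZArith.
From Coquelicot Require Import Coquelicot.
From Stdlib Require Import Lia Lra Psatz FunctionalExtensionality.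
Open Scope R_scope.

Lemma jcont_2d f : jcont f -> forall a b, continuity_2d_pt f a b.
Proof.
  intros Hf a b eps. destruct (Hf a b eps (cond_pos eps)) as [d [Hd H]].
  exists (mkposreal d Hd). intros u v Hu Hv. apply H; assumption.
Qed.

Lemma pd1_lim f a b : ex_derive (fun t => f t b) a ->
  derivable_pt_lim (fun t => f t b) a (pd1 f a b).
Proof. intros H. apply is_derive_Reals. apply Derive_correct. exact H. Qed.

Lemma pd2_lim f a b : ex_derive (fun t => f a t) b ->
  derivable_pt_lim (fun t => f a t) b (pd2 f a b).
Proof. intros H. apply is_derive_Reals. apply Derive_correct. exact H. Qed.

Lemma mvt_line (g dg : R -> R) a u :
  (forall s, derivable_pt_lim g s (dg s)) ->
  exists c, Rabs (c - a) <= Rabs (u - a) /\ g u - g a = dg c * (u - a).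
Proof.
  intros Hg. destruct (Req_dec u a) as [->|Hne].
  - exists a. split. rewrite Rminus_diag, Rabs_R0. lra. ring.
  - destruct (Rlt_or_le a u) as [Hlt|Hle].
    + destruct (MVT_cor2 g dg a u Hlt (fun c _ => Hg c)) as [c [Hc1 Hc2]].
      exists c. split; [|lra]. rewrite !Rabs_right; lra.
    + assert (Hlt: u < a) by lra.
      destruct (MVT_cor2 g dg u a Hlt (fun c _ => Hg c)) as [c [Hc1 Hc2]].
      exists c. split; [|lra]. rewrite !Rabs_left1; lra.
Qed.

Lemma isC1_diff f : isC1 f -> forall a b,
  differentiable_pt_lim f a b (pd1 f a b) (pd2 f a b).
Proof.
  intros [Hex [Hc0 [H1 H2]]] a b eps.
  assert (He2 : 0 < eps / 2) by (destruct eps; simpl; lra).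
  destruct (H1 a b (eps/2) He2) as [d1 [Hd1 K1]].
  destruct (H2 a b (eps/2) He2) as [d2 [Hd2 K2]].
  assert (Hd : 0 < Rmin d1 d2) by (apply Rmin_pos; lra).
  exists (mkposreal _ Hd). cbv beta. intros u v Hu Hv. change (pos (mkposreal _ Hd)) with (Rmin d1 d2) in Hu, Hv.
  assert (Hu1 : Rabs (u - a) < d1) by (eapply Rlt_le_trans; [exact Hu|apply Rmin_l]).
  assert (Hu2 : Rabs (u - a) < d2) by (eapply Rlt_le_trans; [exact Hu|apply Rmin_r]).
  assert (Hv1 : Rabs (v - b) < d1) by (eapply Rlt_le_trans; [exact Hv|apply Rmin_l]).
  assert (Hv2 : Rabs (v - b) < d2) by (eapply Rlt_le_trans; [exact Hv|apply Rmin_r]).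
  destruct (mvt_line (fun t => f t v) (fun t => pd1 f t v) a u) as [c [Hc Ec]].
  { intros s. apply pd1_lim. exact (proj1 (Hex s v)). }
  destruct (mvt_line (fun t => f a t) (fun t => pd2 f a t) b v) as [e [He Ee]].
  { intros s. apply pd2_lim. exact (proj2 (Hex a s)). }
  cbv beta in Ec, Ee.
  assert (Kc : Rabs (pd1 f c v - pd1 f a b) < eps/2) by (apply K1; lra).
  assert (Ke : Rabs (pd2 f a e - pd2 f a b) < eps/2) by (apply K2; [rewrite Rminus_diag, Rabs_R0; lra | lra]).
  replace (f u v - f a b - (pd1 f a b * (u - a) + pd2 f a b * (v - b)))
    with ((pd1 f c v - pd1 f a b) * (u - a) + (pd2 f a e - pd2 f a b) * (v - b)) by lra.
  eapply Rle_trans; [apply Rabs_triang|]. rewrite !Rabs_mult.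
  assert (Rabs (u - a) <= Rmax (Rabs (u - a)) (Rabs (v - b))) by apply Rmax_l.
  assert (Rabs (v - b) <= Rmax (Rabs (u - a)) (Rabs (v - b))) by apply Rmax_r.
  pose proof (Rabs_pos (u - a)). pose proof (Rabs_pos (v - b)).
  set (X := Rabs (u - a)) in *. set (Y := Rabs (v - b)) in *. set (Mx := Rmax X Y) in *.
  set (P := Rabs (pd1 f c v - pd1 f a b)) in *. set (Q := Rabs (pd2 f a e - pd2 f a b)) in *.
  assert (P * X <= eps/2 * Mx).
  { apply Rmult_le_compat; try lra. apply Rabs_pos. }
  assert (Q * Y <= eps/2 * Mx).
  { apply Rmult_le_compat; try lra. apply Rabs_pos. }
  assert (E : pos eps * Mx = eps/2*Mx + eps/2*Mx) by field. rewrite E.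
  exact (Rplus_le_compat _ _ _ _ H5 H6).
Qed.

Lemma chain2 f g1 g2 t d1 d2 : isC1 f ->
  derivable_pt_lim g1 t d1 -> derivable_pt_lim g2 t d2 ->
  derivable_pt_lim (fun s => f (g1 s) (g2 s)) t
    (pd1 f (g1 t) (g2 t) * d1 + pd2 f (g1 t) (g2 t) * d2).
Proof.
  intros Hf H1 H2. apply derivable_pt_lim_comp_2d; auto. apply isC1_diff; auto.
Qed.

Lemma isC2_C1 H : isC2 H -> isC1 H. Proof. intros [h _]; exact h. Qed.
Lemma isC2_C1_1 H : isC2 H -> isC1 (pd1 H). Proof. intros [_ [h _]]; exact h. Qed.
Lemma isC2_C1_2 H : isC2 H -> isC1 (pd2 H). Proof. intros [_ [_ h]]; exact h. Qed.

Lemma schwarz_C2 H : isC2 H -> forall a b, pd1 (pd2 H) a b = pd2 (pd1 H) a b.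
Proof.
  intros HC a b. destruct HC as [[E0 _] [[E1 [_ [_ C12]]] [E2 [_ [C21 _]]]]].
  change (Derive (fun z => Derive (fun t => H z t) b) a =
          Derive (fun z => Derive (fun t => H t z) a) b).
  apply (Schwarz H a b).
  - exists (mkposreal 1 Rlt_0_1). intros u v _ _.
    split; [exact (proj1 (E0 u v))|]. split; [exact (proj2 (E0 u v))|]. split; [exact (proj1 (E2 u v))|exact (proj2 (E1 u v))].
  - exact (jcont_2d _ C21 a b).
  - exact (jcont_2d _ C12 a b).
Qed.

Lemma lim_unique_ext (f g : R -> R) x l1 l2 : (forall t, f t = g t) ->
  derivable_pt_lim f x l1 -> derivable_pt_lim g x l2 -> l1 = l2.
Proof.
  intros E H1 H2. assert (f = g) by (apply functional_extensionality; exact E).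
  subst. eapply uniqueness_limite; eauto.
Qed.

Lemma lim_Derive f x l : derivable_pt_lim f x l -> Derive f x = l.
Proof. intros H. apply is_derive_unique. apply is_derive_Reals. exact H. Qed.

Lemma affine_lim p w t : derivable_pt_lim (fun s => p + s * w) t w.
Proof.
  apply is_derive_Reals. auto_derive; auto. ring.
Qed.

Definition per1 (f : R -> R -> R) := forall a b, f (a + 1) (b + 1) = f a b.

Lemma shift_lim (g : R -> R) a l : derivable_pt_lim g a l ->
  derivable_pt_lim (fun t => g (t - 1)) (a + 1) l.
Proof.
  intros H. replace l with (l * 1) by ring.
  apply (derivable_pt_lim_comp (fun t => t - 1) g).
  - apply is_derive_Reals. auto_derive; auto; try ring.
  - replace (a + 1 - 1) with a by ring. exact H.
Qed.

Lemma per_pd1 f : per1 f -> (forall a b, ex_derive (fun t => f t b) a) -> per1 (pd1 f).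
Proof.
  intros P E a b.
  change (Derive (fun t => f t (b+1)) (a+1) = pd1 f a b).
  apply lim_Derive.
  assert (Ef : (fun t => f t (b+1)) = (fun t => f (t - 1) b)).
  { apply functional_extensionality. intros t. rewrite <- (P _ b). replace (t - 1 + 1) with t by ring. reflexivity. }
  rewrite Ef. apply (shift_lim (fun t => f t b)). apply pd1_lim. apply E.
Qed.

Lemma per_pd2 f : per1 f -> (forall a b, ex_derive (fun t => f a t) b) -> per1 (pd2 f).
Proof.
  intros P E a b.
  change (Derive (fun t => f (a+1) t) (b+1) = pd2 f a b).
  apply lim_Derive.
  assert (Ef : (fun t => f (a+1) t) = (fun t => f a (t - 1))).
  { apply functional_extensionality. intros t. rewrite <- (P a (t - 1)). replace (t - 1 + 1) with t by ring. reflexivity. }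
  rewrite Ef. apply (shift_lim (fun t => f a t)). apply pd2_lim. apply E.
Qed.

Lemma per_nat f : per1 f -> forall (n : nat) a b, f (a + INR n) (b + INR n) = f a b.
Proof.
  intros P n. induction n as [|n IH]; intros a b.
  - simpl. rewrite !Rplus_0_r. reflexivity.
  - rewrite S_INR. replace (a + (INR n + 1)) with ((a + INR n) + 1) by ring.
    replace (b + (INR n + 1)) with ((b + INR n) + 1) by ring. rewrite P. apply IH.
Qed.

Lemma per_Z f : per1 f -> forall (m : Z) a b a' b',
  a' = a + IZR m -> b' = b + IZR m -> f a' b' = f a b.
Proof.
  intros P m a b a' b' -> ->. destruct (Z_le_gt_dec 0 m) as [Hm|Hm].
  - rewrite <- (Z2Nat.id m Hm), <- INR_IZR_INZ. apply per_nat; auto.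
  - assert (Hm' : (0 <= - m)%Z) by lia.
    pose proof (per_nat f P (Z.to_nat (- m)) (a + IZR m) (b + IZR m)) as K.
    rewrite INR_IZR_INZ, Z2Nat.id in K by lia. rewrite opp_IZR in K.
    replace (a + IZR m + - IZR m) with a in K by ring.
    replace (b + IZR m + - IZR m) with b in K by ring. auto.
Qed.

Fixpoint sumZ (f : Z -> R) (M : Z) (L : nat) : R :=
  match L with O => 0 | S L' => sumZ f M L' + f (M + Z.of_nat L')%Z end.

Lemma action_sumZ H x M L : action H x M L = sumZ (fun n => H (x n) (x (n + 1)%Z)) M L.
Proof. induction L; simpl; [reflexivity|]. rewrite IHL. reflexivity. Qed.

Lemma sumZ_ext f g M L : (forall i, (i < L)%nat -> f (M + Z.of_nat i)%Z = g (M + Z.of_nat i)%Z) ->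
  sumZ f M L = sumZ g M L.
Proof.
  induction L; intros E; simpl; [reflexivity|]. rewrite IHL by (intros; apply E; lia).
  rewrite E by lia. reflexivity.
Qed.

Lemma sumZ_le f g M L : (forall i, (i < L)%nat -> f (M + Z.of_nat i)%Z <= g (M + Z.of_nat i)%Z) ->
  sumZ f M L <= sumZ g M L.
Proof.
  induction L; intros E; simpl; [lra|].
  apply Rplus_le_compat; [apply IHL; intros; apply E; lia| apply E; lia].
Qed.

Lemma sumZ_zero f M L : (forall i, (i < L)%nat -> f (M + Z.of_nat i)%Z = 0) -> sumZ f M L = 0.
Proof.
  intros E. transitivity (sumZ (fun _ => 0) M L).
  - apply sumZ_ext. intros; rewrite E; auto.
  - induction L; simpl; [reflexivity|]. rewrite IHL by (intros; apply E; lia). ring.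
Qed.

Lemma sumZ_telescope (al be : Z -> R) M L :
  sumZ (fun n => al n + be (n + 1)%Z) M (S L) =
  al M + sumZ (fun m => be m + al m) (M + 1) L + be (M + Z.of_nat (S L))%Z.
Proof.
  induction L.
  - simpl. rewrite Z.add_0_r. replace (M + 1)%Z with (M + Z.of_nat 1)%Z by reflexivity. ring.
  - change (sumZ (fun n => al n + be (n + 1)%Z) M (S (S L))) with
      (sumZ (fun n => al n + be (n + 1)%Z) M (S L) + (al (M + Z.of_nat (S L))%Z + be (M + Z.of_nat (S L) + 1)%Z)).
    rewrite IHL. simpl sumZ at 2.
    replace (M + 1 + Z.of_nat L)%Z with (M + Z.of_nat (S L))%Z by lia.
    replace (M + Z.of_nat (S L) + 1)%Z with (M + Z.of_nat (S (S L)))%Z by lia. ring.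
Qed.

Definition qterm (a b c v : Z -> R) (n : Z) : R :=
  a n * v n * v n + 2 * b n * v n * v (n + 1)%Z + c n * v (n + 1)%Z * v (n + 1)%Z.

Definition Jop (a b c u : Z -> R) (m : Z) : R :=
  b (m - 1)%Z * u (m - 1)%Z + (c (m - 1)%Z + a m) * u m + b m * u (m + 1)%Z.

Lemma sbp a b c v M L : v M = 0 -> v (M + Z.of_nat (S L))%Z = 0 ->
  sumZ (qterm a b c v) M (S L) = sumZ (fun m => v m * Jop a b c v m) (M + 1) L.
Proof.
  intros H0 H1.
  set (al := fun n => a n * v n * v n + b n * v n * v (n + 1)%Z).
  set (be := fun m => c (m - 1)%Z * v m * v m + b (m - 1)%Z * v (m - 1)%Z * v m).
  transitivity (sumZ (fun n => al n + be (n + 1)%Z) M (S L)).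
  - apply sumZ_ext. intros i _. unfold qterm, al, be.
    replace (M + Z.of_nat i + 1 - 1)%Z with (M + Z.of_nat i)%Z by lia. ring.
  - rewrite sumZ_telescope. unfold al at 1. unfold be at 2. rewrite H0, H1.
    replace (sumZ (fun m => be m + al m) (M + 1) L) with (sumZ (fun m => v m * Jop a b c v m) (M + 1) L).
    + ring.
    + apply sumZ_ext. intros i _. unfold be, al, Jop. ring.
Qed.

Lemma picone_term a b c p r v w : 0 < p -> 0 < r -> 0 < b ->
  a * v * v + 2 * b * v * w + c * w * w <=
  (a * p + b * r) * (v * v) / p + (c * r + b * p) * (w * w) / r.
Proof.
  intros Hp Hr Hb.
  assert (E : (a * p + b * r) * (v * v) / p + (c * r + b * p) * (w * w) / r -
              (a * v * v + 2 * b * v * w + c * w * w) = b * ((r * v - p * w) * (r * v - p * w)) / (p * r)).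
  { field. lra. }
  assert (0 <= b * ((r * v - p * w) * (r * v - p * w)) / (p * r)).
  { apply Rmult_le_pos. apply Rmult_le_pos. lra. apply Rle_0_sqr.
    left. apply Rinv_0_lt_compat. nra. }
  lra.
Qed.

Lemma picone a b c u v M L :
  (forall i, (i <= S L)%nat -> 0 < u (M + Z.of_nat i)%Z) ->
  (forall i, (i <= L)%nat -> 0 < b (M + Z.of_nat i)%Z) ->
  (forall i, (i < L)%nat -> Jop a b c u (M + 1 + Z.of_nat i)%Z <= 0) ->
  v M = 0 -> v (M + Z.of_nat (S L))%Z = 0 ->
  sumZ (qterm a b c v) M (S L) <= 0.
Proof.
  intros Hu Hb HJ H0 H1.
  set (al := fun n => (a n * u n + b n * u (n + 1)%Z) * (v n * v n) / u n).
  set (be := fun m => (c (m - 1)%Z * u m + b (m - 1)%Z * u (m - 1)%Z) * (v m * v m) / u m).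
  apply Rle_trans with (sumZ (fun n => al n + be (n + 1)%Z) M (S L)).
  - apply sumZ_le. intros i Hi. unfold qterm, al, be.
    replace (M + Z.of_nat i + 1 - 1)%Z with (M + Z.of_nat i)%Z by lia.
    apply picone_term.
    + apply (Hu i). lia.
    + replace (M + Z.of_nat i + 1)%Z with (M + Z.of_nat (S i))%Z by lia. apply Hu. lia.
    + apply Hb. lia.
  - rewrite sumZ_telescope. unfold al at 1. unfold be at 2. rewrite H0, H1.
    assert (sumZ (fun m => be m + al m) (M + 1) L <= 0).
    { apply Rle_trans with (sumZ (fun _ => 0) (M + 1) L).
      - apply sumZ_le. intros i Hi. unfold be, al.
        assert (Hui : 0 < u (M + 1 + Z.of_nat i)%Z).
        { replace (M + 1 + Z.of_nat i)%Z with (M + Z.of_nat (S i))%Z by lia. apply Hu. lia. }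
        set (m := (M + 1 + Z.of_nat i)%Z) in *.
        replace ((c (m - 1)%Z * u m + b (m - 1)%Z * u (m - 1)%Z) * (v m * v m) / u m +
           (a m * u m + b m * u (m + 1)%Z) * (v m * v m) / u m)
          with ((v m * v m) / u m * Jop a b c u m) by (unfold Jop; field; lra).
        assert (0 <= v m * v m / u m).
        { apply Rmult_le_pos. apply Rle_0_sqr. left. apply Rinv_0_lt_compat. lra. }
        pose proof (HJ i Hi). fold m in H2. nra.
      - rewrite sumZ_zero; [lra|]. reflexivity. }
    lra.
Qed.

Fixpoint jrec (a b c r : Z -> R) (M : Z) (s0 s1 : R) (k : nat) : R * R :=
  match k with
  | O => (s0, s1)
  | S k' => let P := jrec a b c r M s0 s1 k' in
            let m := (M + Z.of_nat k' + 1)%Z in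
            (snd P, (r m - b (m - 1)%Z * fst P - (c (m - 1)%Z + a m) * snd P) / b m)
  end.

Definition jseq a b c r M s0 s1 (n : Z) : R := fst (jrec a b c r M s0 s1 (Z.to_nat (n - M))).

Lemma jseq_at a b c r M s0 s1 k : jseq a b c r M s0 s1 (M + Z.of_nat k)%Z = fst (jrec a b c r M s0 s1 k).
Proof. unfold jseq. f_equal. f_equal. lia. Qed.

Lemma jseq_succ a b c r M s0 s1 k : jseq a b c r M s0 s1 (M + Z.of_nat k + 1)%Z = snd (jrec a b c r M s0 s1 k).
Proof.
  replace (M + Z.of_nat k + 1)%Z with (M + Z.of_nat (S k))%Z by lia. rewrite jseq_at. reflexivity.
Qed.

Lemma jseq_0 a b c r M s0 s1 : jseq a b c r M s0 s1 M = s0.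
Proof. unfold jseq. rewrite Z.sub_diag. reflexivity. Qed.

Lemma jseq_1 a b c r M s0 s1 : jseq a b c r M s0 s1 (M + 1)%Z = s1.
Proof. replace (M + 1)%Z with (M + Z.of_nat 0 + 1)%Z by lia. rewrite jseq_succ. reflexivity. Qed.

Lemma jseq_J a b c r M s0 s1 : (forall m, b m <> 0) ->
  forall m, (M + 1 <= m)%Z -> Jop a b c (jseq a b c r M s0 s1) m = r m.
Proof.
  intros Hb m Hm. set (k := Z.to_nat (m - M - 1)).
  assert (Em : m = (M + Z.of_nat k + 1)%Z) by (unfold k; lia).
  unfold Jop. rewrite Em.
  replace (M + Z.of_nat k + 1 - 1)%Z with (M + Z.of_nat k)%Z by lia.
  rewrite jseq_at, jseq_succ.
  replace (M + Z.of_nat k + 1 + 1)%Z with (M + Z.of_nat (S k) + 1)%Z by lia.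
  rewrite jseq_succ. simpl jrec. cbv zeta. simpl snd.
  replace (M + Z.of_nat k + 1 - 1)%Z with (M + Z.of_nat k)%Z by lia.
  field. apply Hb.
Qed.

Lemma sumZ_SS f M k : sumZ f M (S (S k)) = sumZ f M k + f (M + Z.of_nat k)%Z + f (M + Z.of_nat (S k))%Z.
Proof. reflexivity. Qed.

Lemma sturm a b c e M :
  (forall n, 0 < b n) ->
  (forall M' L v, v M' = 0 -> v (M' + Z.of_nat (S L))%Z = 0 -> sumZ (qterm a b c v) M' (S L) <= 0) ->
  e (M - 1)%Z = 0 -> e M = 1 -> (forall m, (M <= m)%Z -> Jop a b c e m = 0) ->
  forall k : nat, 0 < e (M + Z.of_nat k)%Z.
Proof.
  intros Hb QN He0 He1 HJ.
  assert (forall k i, (i <= k)%nat -> 0 < e (M + Z.of_nat i)%Z); [|intros k; apply (H k k); lia].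
  induction k as [|k IH]; intros i Hi.
  - assert (i = 0%nat) by lia. subst. rewrite Z.add_0_r, He1. lra.
  - destruct (Nat.le_gt_cases i k) as [Hik|Hik]; [apply IH; auto|].
    assert (i = S k) by lia. subst i.
    set (K := (M + Z.of_nat (S k))%Z).
    destruct (Rlt_or_le 0 (e K)) as [Hpos|Hneg]; [exact Hpos|exfalso].
    set (E1 := e (K - 1)%Z).
    assert (HE1 : 0 < E1).
    { unfold E1, K. replace (M + Z.of_nat (S k) - 1)%Z with (M + Z.of_nat k)%Z by lia. apply IH. lia. }
    set (bb := b (K - 1)%Z). assert (Hbb : 0 < bb) by apply Hb.
    set (D := c (K - 1)%Z + a K).
    set (t := bb * E1 / (Rabs D + 1)).
    assert (HD : 0 <= Rabs D) by apply Rabs_pos.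
    assert (Ht : 0 < t) by (unfold t; apply Rdiv_lt_0_compat; nra).
    assert (Htt : t * (Rabs D + 1) = bb * E1) by (unfold t; field; lra).
    set (v := fun n => if (n <=? K - 1)%Z then (if (M <=? n)%Z then e n else 0)
                        else if (n =? K)%Z then t else 0).
    assert (Ve : forall n, (M - 1 <= n <= K - 1)%Z -> v n = e n).
    { intros n Hn. unfold v. destruct (Z.leb_spec n (K - 1)); [|lia].
      destruct (Z.leb_spec M n); [reflexivity|]. replace n with (M - 1)%Z by lia. auto. }
    assert (VK : v K = t).
    { unfold v. destruct (Z.leb_spec K (K - 1)); [lia|]. rewrite Z.eqb_refl. reflexivity. }
    assert (VK1 : v (K + 1)%Z = 0).
    { unfold v. destruct (Z.leb_spec (K + 1) (K - 1)); [lia|].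
      destruct (Z.eqb_spec (K + 1) K); [lia|]. reflexivity. }
    assert (V0 : v (M - 1)%Z = 0) by (rewrite Ve by (unfold K; lia); auto).
    pose proof (QN (M - 1)%Z (S (S k)) v V0) as Q.
    replace (M - 1 + Z.of_nat (S (S (S k))))%Z with (K + 1)%Z in Q by (unfold K; lia).
    specialize (Q VK1). rewrite sbp in Q by (auto; replace (M - 1 + Z.of_nat (S (S (S k))))%Z with (K + 1)%Z by (unfold K; lia); auto).
    replace (M - 1 + 1)%Z with M in Q by lia.
    rewrite sumZ_SS in Q.
    rewrite sumZ_zero in Q.
    2:{ intros i Hi2. assert (Jop a b c v (M + Z.of_nat i)%Z = Jop a b c e (M + Z.of_nat i)%Z).
        { unfold Jop. rewrite !Ve by (unfold K; lia). reflexivity. }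
        rewrite H, HJ by lia. ring. }
    replace (M + Z.of_nat (S k))%Z with K in Q by reflexivity.
    replace (M + Z.of_nat k)%Z with (K - 1)%Z in Q by (unfold K; lia).
    assert (J1 : Jop a b c v (K - 1)%Z = bb * (t - e K)).
    { pose proof (HJ (K - 1)%Z ltac:(unfold K; lia)) as J0. unfold Jop in *.
      replace (K - 1 + 1)%Z with K in * by lia.
      rewrite (Ve (K - 1 - 1)%Z) by (unfold K; lia). rewrite (Ve (K - 1)%Z) by (unfold K; lia).
      rewrite VK. fold bb in J0 |- *. lra. }
    assert (J2 : Jop a b c v K = bb * E1 + D * t).
    { unfold Jop. rewrite VK, VK1, (Ve (K - 1)%Z) by (unfold K; lia). fold bb E1. unfold D. ring. }
    rewrite J1, J2, VK, (Ve (K - 1)%Z) in Q by (unfold K; lia). fold E1 in Q.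
    assert (HDt : - (Rabs D * t) <= D * t).
    { destruct (Rle_or_lt 0 D). rewrite Rabs_right by lra. nra. rewrite Rabs_left by lra. nra. }
    assert (Rabs D * t < bb * E1) by nra.
    assert (0 < bb * E1 * t) by (apply Rmult_lt_0_compat; nra).
    assert (- (Rabs D * t) * t <= D * t * t) by nra.
    assert (0 <= bb * E1 * (- e K)) by nra.
    nra.
Qed.

Lemma lim_eq f t l l' : derivable_pt_lim f t l -> l = l' -> derivable_pt_lim f t l'.
Proof. intros H ->; exact H. Qed.

Lemma lim_mulc f t l k : derivable_pt_lim f t l -> derivable_pt_lim (fun s => f s * k) t (l * k).
Proof.
  intros H. eapply lim_eq.
  - apply (derivable_pt_lim_mult f (fun _ => k)); [exact H| apply derivable_pt_lim_const].
  - ring.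
Qed.

Lemma lim_plus f g t l l' : derivable_pt_lim f t l -> derivable_pt_lim g t l' ->
  derivable_pt_lim (fun s => f s + g s) t (l + l').
Proof. intros; apply derivable_pt_lim_plus; auto. Qed.

Lemma sumZ_lim (F : Z -> R -> R) (F' : Z -> R) t M L :
  (forall n, derivable_pt_lim (F n) t (F' n)) ->
  derivable_pt_lim (fun s => sumZ (fun n => F n s) M L) t (sumZ F' M L).
Proof.
  intros HF. induction L.
  - simpl. apply derivable_pt_lim_const.
  - change (derivable_pt_lim (fun s => sumZ (fun n => F n s) M L + F (M + Z.of_nat L)%Z s) t
             (sumZ F' M L + F' (M + Z.of_nat L)%Z)).
    apply lim_plus; auto.
Qed.

Definition Ac W (y : Z -> R) n := pd1 (pd1 W) (y n) (y (n + 1)%Z).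
Definition Bc W (y : Z -> R) n := pd2 (pd1 W) (y n) (y (n + 1)%Z).
Definition Cc W (y : Z -> R) n := pd2 (pd2 W) (y n) (y (n + 1)%Z).

Definition yl (q v : Z -> R) (t : R) : Z -> R := fun n => q n + t * v n.

Lemma lin_lim (q v : Z -> R) n t : derivable_pt_lim (fun s => q n + s * v n) t (v n).
Proof. apply affine_lim. Qed.

Lemma d_term W q v n t : isC1 W ->
  derivable_pt_lim (fun s => W (yl q v s n) (yl q v s (n + 1)%Z)) t
    (pd1 W (yl q v t n) (yl q v t (n + 1)%Z) * v n + pd2 W (yl q v t n) (yl q v t (n + 1)%Z) * v (n + 1)%Z).
Proof.
  intros HW. unfold yl. apply (chain2 W (fun s => q n + s * v n) (fun s => q (n+1)%Z + s * v (n+1)%Z)); auto; apply lin_lim.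
Qed.

Definition dact W q v t n :=
  pd1 W (yl q v t n) (yl q v t (n + 1)%Z) * v n + pd2 W (yl q v t n) (yl q v t (n + 1)%Z) * v (n + 1)%Z.

Lemma d_action W q v M L t : isC1 W ->
  derivable_pt_lim (fun s => sumZ (fun n => W (yl q v s n) (yl q v s (n + 1)%Z)) M L) t
    (sumZ (dact W q v t) M L).
Proof.
  intros HW. apply (sumZ_lim (fun n s => W (yl q v s n) (yl q v s (n + 1)%Z))).
  intros n. apply d_term; auto.
Qed.

Lemma dd_term W q v n t : isC2 W ->
  derivable_pt_lim (fun s => dact W q v s n) t
    (qterm (Ac W (yl q v t)) (Bc W (yl q v t)) (Cc W (yl q v t)) v n).
Proof.
  intros HW. unfold dact. eapply lim_eq.
  - apply lim_plus; apply lim_mulc; apply d_term.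
    + apply isC2_C1_1; auto.
    + apply isC2_C1_2; auto.
  - unfold qterm, Ac, Bc, Cc. rewrite (schwarz_C2 W HW). ring.
Qed.

Lemma dd_action W q v M L t : isC2 W ->
  derivable_pt_lim (fun s => sumZ (dact W q v s) M L) t
    (sumZ (qterm (Ac W (yl q v t)) (Bc W (yl q v t)) (Cc W (yl q v t)) v) M L).
Proof.
  intros HW. apply (sumZ_lim (fun n s => dact W q v s n)). intros n. apply dd_term; auto.
Qed.

Lemma dact0 W q v M L : is_config W q -> v M = 0 -> v (M + Z.of_nat (S L))%Z = 0 ->
  sumZ (dact W q v 0) M (S L) = 0.
Proof.
  intros Hc H0 H1.
  set (al := fun n => pd1 W (q n) (q (n + 1)%Z) * v n).
  set (be := fun m => pd2 W (q (m - 1)%Z) (q m) * v m).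
  transitivity (sumZ (fun n => al n + be (n + 1)%Z) M (S L)).
  - apply sumZ_ext. intros i _. unfold dact, yl, al, be.
    replace (M + Z.of_nat i + 1 - 1)%Z with (M + Z.of_nat i)%Z by lia.
    rewrite !Rmult_0_l, !Rplus_0_r. reflexivity.
  - rewrite sumZ_telescope. unfold al at 1. unfold be at 2. rewrite H0, H1.
    rewrite sumZ_zero; [ring|]. intros i _. unfold be, al.
    rewrite <- Rmult_plus_distr_r. rewrite Hc. ring.
Qed.

Lemma fin_min (P : nat -> R -> Prop) L :
  (forall i e e', P i e -> 0 < e' <= e -> P i e') ->
  (forall i, (i <= L)%nat -> exists e, 0 < e /\ P i e) ->
  exists e, 0 < e /\ forall i, (i <= L)%nat -> P i e.
Proof.
  intros Mono. induction L; intros Hex.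
  - destruct (Hex 0%nat (le_n 0)) as [e [He Pe]]. exists e. split; auto.
    intros i Hi. assert (i = 0%nat) by lia. subst; auto.
  - destruct IHL as [e1 [He1 P1]]. { intros i Hi. apply Hex. lia. }
    destruct (Hex (S L) (le_n _)) as [e2 [He2 P2]].
    exists (Rmin e1 e2). split. apply Rmin_pos; auto.
    intros i Hi. destruct (Nat.le_gt_cases i L).
    + apply Mono with e1; auto. split. apply Rmin_pos; auto. apply Rmin_l.
    + assert (i = S L) by lia. subst. apply Mono with e2; auto. split. apply Rmin_pos; auto. apply Rmin_r.
Qed.

Lemma yl0 q v n : yl q v 0 n = q n.
Proof. unfold yl. ring. Qed.

Lemma g0_action W q v M L :
  sumZ (fun n => W (yl q v 0 n) (yl q v 0 (n + 1)%Z)) M L = action W q M L.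
Proof. rewrite action_sumZ. apply sumZ_ext. intros. rewrite !yl0. reflexivity. Qed.

Lemma necessity_Q W q : isC2 W -> is_mconfig W q ->
  forall M L v, v M = 0 -> v (M + Z.of_nat (S L))%Z = 0 ->
  sumZ (qterm (Ac W q) (Bc W q) (Cc W q) v) M (S L) <= 0.
Proof.
  intros HW [Hc Hm] M L v H0 H1.
  set (N := (M + Z.of_nat (S L))%Z).
  destruct (Hm M N ltac:(unfold N; lia)) as [eps [Heps Hloc]].
  destruct (fin_min (fun i tau => forall t, Rabs t < tau -> Rabs (t * v (M + Z.of_nat i)%Z) < eps) (S L))
    as [tau [Htau Ptau]].
  { intros i e e' Pe He' t Ht. apply Pe. lra. }
  { intros i _. exists (eps / (Rabs (v (M + Z.of_nat i)%Z) + 1)). split.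
    - apply Rdiv_lt_0_compat; auto. pose proof (Rabs_pos (v (M + Z.of_nat i)%Z)). lra.
    - intros t Ht. rewrite Rabs_mult. set (w := Rabs (v (M + Z.of_nat i)%Z)).
      assert (0 <= w) by apply Rabs_pos. assert (0 <= Rabs t) by apply Rabs_pos.
      apply Rle_lt_trans with (Rabs t * (w + 1)). nra.
      apply Rmult_lt_reg_r with (/ (w + 1)). apply Rinv_0_lt_compat; lra.
      rewrite Rmult_assoc, Rinv_r by lra. rewrite Rmult_1_r. exact Ht. }
  set (g := fun s => sumZ (fun n => W (yl q v s n) (yl q v s (n + 1)%Z)) M (S L)).
  assert (Loc : forall t, Rabs t < tau -> g t <= g 0).
  { intros t Ht. unfold g. rewrite g0_action, action_sumZ.
    pose proof (Hloc (yl q v t)) as K.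
    replace (Z.to_nat (N - M)) with (S L) in K by (unfold N; lia).
    rewrite !action_sumZ in K. apply K.
    - unfold yl. rewrite H0. ring.
    - unfold yl, N. rewrite H1. ring.
    - intros n Hn. unfold yl. replace (q n + t * v n - q n) with (t * v n) by ring.
      replace n with (M + Z.of_nat (Z.to_nat (n - M)))%Z by lia. apply Ptau; auto. unfold N in Hn. lia. }
  destruct (Rle_or_lt (sumZ (qterm (Ac W q) (Bc W q) (Cc W q) v) M (S L)) 0) as [Hle|Hgt]; [exact Hle|exfalso].
  set (Qv := sumZ (qterm (Ac W q) (Bc W q) (Cc W q) v) M (S L)) in *.
  pose proof (dd_action W q v M (S L) 0 HW) as D2.
  assert (E0 : (fun n => yl q v 0 n) = q) by (apply functional_extensionality; apply yl0).
  assert (EQ : sumZ (qterm (Ac W (yl q v 0)) (Bc W (yl q v 0)) (Cc W (yl q v 0)) v) M (S L) = Qv).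
  { unfold Qv. apply sumZ_ext. intros. unfold qterm, Ac, Bc, Cc. rewrite !yl0. reflexivity. }
  rewrite EQ in D2.
  pose proof (dact0 W q v M L Hc H0 H1) as G0.
  destruct (D2 (Qv / 2) ltac:(lra)) as [dl Hdl].
  assert (Pos : forall h, 0 < h < dl -> 0 < sumZ (dact W q v h) M (S L)).
  { intros h Hh. pose proof (Hdl h ltac:(lra) ltac:(rewrite Rabs_right; lra)) as K.
    rewrite Rplus_0_l, G0, Rminus_0_r in K.
    apply Rabs_def2 in K. destruct K as [K1 K2].
    assert (0 < sumZ (dact W q v h) M (S L) / h) by lra.
    replace (sumZ (dact W q v h) M (S L)) with (sumZ (dact W q v h) M (S L) / h * h) by (field; lra).
    apply Rmult_lt_0_compat; lra. }
  set (t0 := Rmin dl tau / 2).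
  assert (Ht0 : 0 < t0) by (unfold t0; pose proof (cond_pos dl); assert (0 < Rmin dl tau) by (apply Rmin_pos; lra); lra).
  assert (Ht0d : t0 < dl) by (unfold t0; pose proof (Rmin_l dl tau); pose proof (cond_pos dl); assert (0 < Rmin dl tau) by (apply Rmin_pos; lra); lra).
  assert (Ht0t : t0 < tau) by (unfold t0; pose proof (Rmin_r dl tau); assert (0 < Rmin dl tau) by (apply Rmin_pos; lra); lra).
  destruct (MVT_cor2 g (fun s => sumZ (dact W q v s) M (S L)) 0 t0 Ht0) as [c [Ec Hc']].
  { intros c _. unfold g. apply d_action. apply isC2_C1; auto. }
  pose proof (Pos c ltac:(lra)).
  pose proof (Loc t0 ltac:(rewrite Rabs_right; lra)).
  assert (0 < sumZ (dact W q v c) M (S L) * (t0 - 0)) by (apply Rmult_lt_0_compat; lra).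
  lra.
Qed.

Lemma jc_B W : isC2 W -> jcont (pd2 (pd1 W)).
Proof. intros H. destruct (isC2_C1_1 W H) as [_ [_ [_ h]]]. exact h. Qed.
Lemma jc_A W : isC2 W -> jcont (pd1 (pd1 W)).
Proof. intros H. destruct (isC2_C1_1 W H) as [_ [_ [h _]]]. exact h. Qed.
Lemma jc_C W : isC2 W -> jcont (pd2 (pd2 W)).
Proof. intros H. destruct (isC2_C1_2 W H) as [_ [_ [_ h]]]. exact h. Qed.

Lemma min4 d1 d2 d3 d4 : 0 < d1 -> 0 < d2 -> 0 < d3 -> 0 < d4 ->
  exists d, 0 < d /\ d <= d1 /\ d <= d2 /\ d <= d3 /\ d <= d4.
Proof.
  intros. exists (Rmin (Rmin d1 d2) (Rmin d3 d4)).
  repeat split.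
  - repeat apply Rmin_pos; auto.
  - eapply Rle_trans; [apply Rmin_l|apply Rmin_l].
  - eapply Rle_trans; [apply Rmin_l|apply Rmin_r].
  - eapply Rle_trans; [apply Rmin_r|apply Rmin_l].
  - eapply Rle_trans; [apply Rmin_r|apply Rmin_r].
Qed.

Lemma abs_prod_bound x w e U : Rabs x < e -> Rabs w <= U -> 1 <= U -> Rabs (x * w) < e * U.
Proof.
  intros. rewrite Rabs_mult. pose proof (Rabs_pos x). pose proof (Rabs_pos w).
  apply Rle_lt_trans with (Rabs x * U). apply Rmult_le_compat_l; lra.
  apply Rmult_lt_compat_r; lra.
Qed.

Lemma jop_cont W q u m : isC2 W -> forall e, 0 < e -> exists d, 0 < d /\ forall y : Z -> R,
  Rabs (y (m - 1)%Z - q (m - 1)%Z) < d -> Rabs (y m - q m) < d -> Rabs (y (m + 1)%Z - q (m + 1)%Z) < d ->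
  Rabs (Jop (Ac W y) (Bc W y) (Cc W y) u m - Jop (Ac W q) (Bc W q) (Cc W q) u m) < e.
Proof.
  intros HW e He.
  set (U := Rabs (u (m - 1)%Z) + Rabs (u m) + Rabs (u (m + 1)%Z) + 1).
  assert (HU : 1 <= U) by (unfold U; pose proof (Rabs_pos (u (m - 1)%Z)); pose proof (Rabs_pos (u m)); pose proof (Rabs_pos (u (m+1)%Z)); lra).
  set (e' := e / (4 * U)).
  assert (He' : 0 < e') by (unfold e'; apply Rdiv_lt_0_compat; lra).
  destruct (jc_B W HW (q (m - 1)%Z) (q m) e' He') as [d1 [Hd1 K1]].
  destruct (jc_C W HW (q (m - 1)%Z) (q m) e' He') as [d2 [Hd2 K2]].
  destruct (jc_A W HW (q m) (q (m + 1)%Z) e' He') as [d3 [Hd3 K3]].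
  destruct (jc_B W HW (q m) (q (m + 1)%Z) e' He') as [d4 [Hd4 K4]].
  destruct (min4 d1 d2 d3 d4) as [d [Hd [L1 [L2 [L3 L4]]]]]; auto.
  exists d. split; auto. intros y Y1 Y2 Y3.
  unfold Jop, Ac, Bc, Cc. replace (m - 1 + 1)%Z with m by lia.
  set (D1 := pd2 (pd1 W) (y (m - 1)%Z) (y m) - pd2 (pd1 W) (q (m - 1)%Z) (q m)).
  set (D2 := pd2 (pd2 W) (y (m - 1)%Z) (y m) - pd2 (pd2 W) (q (m - 1)%Z) (q m)).
  set (D3 := pd1 (pd1 W) (y m) (y (m + 1)%Z) - pd1 (pd1 W) (q m) (q (m + 1)%Z)).
  set (D4 := pd2 (pd1 W) (y m) (y (m + 1)%Z) - pd2 (pd1 W) (q m) (q (m + 1)%Z)).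
  assert (A1 : Rabs D1 < e') by (apply K1; lra).
  assert (A2 : Rabs D2 < e') by (apply K2; lra).
  assert (A3 : Rabs D3 < e') by (apply K3; lra).
  assert (A4 : Rabs D4 < e') by (apply K4; lra).
  match goal with |- Rabs ?X < _ =>
    replace X with (D1 * u (m - 1)%Z + D2 * u m + D3 * u m + D4 * u (m + 1)%Z) by (unfold D1, D2, D3, D4; ring) end.
  assert (U1 : Rabs (u (m - 1)%Z) <= U) by (unfold U; pose proof (Rabs_pos (u m)); pose proof (Rabs_pos (u (m+1)%Z)); lra).
  assert (U2 : Rabs (u m) <= U) by (unfold U; pose proof (Rabs_pos (u (m-1)%Z)); pose proof (Rabs_pos (u (m+1)%Z)); lra).
  assert (U3 : Rabs (u (m + 1)%Z) <= U) by (unfold U; pose proof (Rabs_pos (u m)); pose proof (Rabs_pos (u (m-1)%Z)); lra).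
  pose proof (abs_prod_bound _ _ _ _ A1 U1 HU).
  pose proof (abs_prod_bound _ _ _ _ A2 U2 HU).
  pose proof (abs_prod_bound _ _ _ _ A3 U2 HU).
  pose proof (abs_prod_bound _ _ _ _ A4 U3 HU).
  assert (E4 : e' * U * 4 = e) by (unfold e'; field; lra).
  eapply Rle_lt_trans. apply Rabs_triang.
  eapply Rle_lt_trans. apply Rplus_le_compat_r. apply Rabs_triang.
  eapply Rle_lt_trans. apply Rplus_le_compat_r. apply Rplus_le_compat_r. apply Rabs_triang.
  assert (0 < e' * U) by (apply Rmult_lt_0_compat; lra).
  lra.
Qed.

Lemma sufficiency W q : isC2 W -> (forall a b, pd2 (pd1 W) a b > 0) -> is_config W q ->
  (forall M N, (M < N)%Z -> exists u, (forall n, (M <= n <= N)%Z -> 0 < u n) /\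
     (forall m, (M < m < N)%Z -> Jop (Ac W q) (Bc W q) (Cc W q) u m = 0)) ->
  is_mconfig W q.
Proof.
  intros HW Htw Hc Hu. split; [exact Hc|]. intros M N HMN.
  set (L := Z.to_nat (N - M - 1)).
  assert (EN : N = (M + Z.of_nat (S L))%Z) by (unfold L; lia).
  destruct (Hu M N HMN) as [u [Up UJ]].
  set (a := Ac W q). set (b := Bc W q). set (c := Cc W q).
  set (z := jseq a b c (fun _ => -1) M 0 0).
  assert (Zj : forall m, (M + 1 <= m)%Z -> Jop a b c z m = -1).
  { intros m Hm. assert (Hb : forall k, b k <> 0).
    { intros k. unfold b, Bc. pose proof (Htw (q k) (q (k+1)%Z)). lra. }
    exact (jseq_J a b c (fun _ => -1) M 0 0 Hb m Hm). }
  destruct (fin_min (fun i e => forall e', 0 < e' <= e -> 0 < u (M + Z.of_nat i)%Z + e' * z (M + Z.of_nat i)%Z) (S L))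
    as [ep [Hep Pep]].
  { intros i e e' Pe He' e'' He''. apply Pe. lra. }
  { intros i Hi. set (ui := u (M + Z.of_nat i)%Z). set (zi := z (M + Z.of_nat i)%Z).
    assert (Hui : 0 < ui) by (apply Up; lia).
    assert (Hz : 0 <= Rabs zi) by apply Rabs_pos.
    exists (ui / (Rabs zi + 1)). split. apply Rdiv_lt_0_compat; lra.
    intros e' He'.
    assert (e' * (Rabs zi + 1) <= ui).
    { destruct He' as [He1 He2]. apply Rmult_le_compat_r with (r := Rabs zi + 1) in He2; [|lra].
      replace (ui / (Rabs zi + 1) * (Rabs zi + 1)) with ui in He2 by (field; lra). exact He2. }
    assert (- (e' * Rabs zi) <= e' * zi).
    { destruct (Rle_or_lt 0 zi). rewrite Rabs_right by lra. nra. rewrite Rabs_left by lra. nra. }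
    nra. }
  set (u' := fun n => u n + ep * z n).
  assert (U'pos : forall i, (i <= S L)%nat -> 0 < u' (M + Z.of_nat i)%Z).
  { intros i Hi. unfold u'. apply (Pep i Hi). lra. }
  assert (U'J : forall m, (M < m < N)%Z -> Jop a b c u' m = - ep).
  { intros m Hm. assert (Jop a b c u' m = Jop a b c u m + ep * Jop a b c z m) by (unfold Jop, u'; ring).
    rewrite H, UJ, Zj by lia. ring. }
  destruct (fin_min (fun i d => (i < L)%nat -> forall y : Z -> R,
       (forall n, (M <= n <= N)%Z -> Rabs (y n - q n) < d) ->
       Jop (Ac W y) (Bc W y) (Cc W y) u' (M + 1 + Z.of_nat i)%Z < 0) L) as [dl [Hdl Pdl]].
  { intros i d d' Pd Hd' Hi y Hy. apply Pd; auto. intros n Hn. specialize (Hy n Hn). lra. }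
  { intros i _. destruct (Nat.lt_ge_cases i L) as [HiL|HiL].
    - set (m := (M + 1 + Z.of_nat i)%Z).
      destruct (jop_cont W q u' m HW ep Hep) as [d [Hd Kd]].
      exists d. split; auto. intros _ y Hy.
      assert (K := Kd y ltac:(apply Hy; unfold m; lia) ltac:(apply Hy; unfold m; lia) ltac:(apply Hy; unfold m; lia)).
      fold a b c in K. rewrite U'J in K by (unfold m; lia).
      apply Rabs_def2 in K. lra.
    - exists 1. split; [lra|]. intros Hi. lia. }
  exists dl. split; auto. intros x XM XN Xc.
  set (v := fun n => x n - q n).
  assert (V0 : v M = 0) by (unfold v; rewrite XM; ring).
  assert (V1 : v (M + Z.of_nat (S L))%Z = 0) by (unfold v; rewrite <- EN, XN; ring).
  assert (Close : forall s, 0 <= s <= 1 -> forall n, (M <= n <= N)%Z -> Rabs (yl q v s n - q n) < dl).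
  { intros s Hs n Hn. unfold yl. replace (q n + s * v n - q n) with (s * v n) by ring.
    rewrite Rabs_mult. rewrite (Rabs_right s) by lra.
    destruct (Z.eq_dec n M) as [->|HnM]. rewrite V0, Rabs_R0. lra.
    destruct (Z.eq_dec n N) as [->|HnN]. rewrite EN, V1, Rabs_R0. lra.
    assert (Rabs (v n) < dl) by (apply Xc; lia).
    pose proof (Rabs_pos (v n)). nra. }
  set (g := fun s => sumZ (fun n => W (yl q v s n) (yl q v s (n + 1)%Z)) M (S L)).
  set (g1 := fun s => sumZ (dact W q v s) M (S L)).
  set (g2 := fun s => sumZ (qterm (Ac W (yl q v s)) (Bc W (yl q v s)) (Cc W (yl q v s)) v) M (S L)).
  assert (G2 : forall s, 0 <= s <= 1 -> g2 s <= 0).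
  { intros s Hs. unfold g2. apply (picone _ _ _ u'); auto.
    - intros i Hi. unfold Bc. apply Rlt_gt. apply Htw.
    - intros i Hi. left. apply (Pdl i); [lia|auto|]. intros n Hn. apply Close; auto. }
  assert (G10 : g1 0 = 0) by (unfold g1; apply dact0; auto).
  assert (G1 : forall s, 0 < s <= 1 -> g1 s <= 0).
  { intros s Hs. destruct (MVT_cor2 g1 g2 0 s ltac:(lra)) as [c' [Ec Hc']].
    { intros c' _. unfold g1, g2. apply dd_action; auto. }
    pose proof (G2 c' ltac:(lra)). rewrite G10 in Ec.
    assert (g2 c' * (s - 0) <= 0). { apply Rmult_le_0_r; lra. } lra. }
  destruct (MVT_cor2 g g1 0 1 ltac:(lra)) as [c' [Ec Hc']].
  { intros c' _. unfold g, g1. apply d_action. apply isC2_C1; auto. }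
  pose proof (G1 c' ltac:(lra)).
  assert (E1 : g 1 = action W x M (Z.to_nat (N - M))).
  { unfold g. replace (Z.to_nat (N - M)) with (S L) by lia. rewrite action_sumZ.
    apply sumZ_ext. intros. unfold yl, v. f_equal; ring. }
  assert (E0 : g 0 = action W q M (Z.to_nat (N - M))).
  { unfold g. replace (Z.to_nat (N - M)) with (S L) by lia. apply g0_action. }
  rewrite <- E1, <- E0. lra.
Qed.

Lemma mconfig_jac W q K : isC2 W -> (forall a b, pd2 (pd1 W) a b > 0) -> is_mconfig W q ->
  (forall m, (K <= m)%Z -> Jop (Ac W q) (Bc W q) (Cc W q) (jseq (Ac W q) (Bc W q) (Cc W q) (fun _ => 0) (K - 1) 0 1) m = 0) /\
  (forall m, (K <= m)%Z -> 0 < jseq (Ac W q) (Bc W q) (Cc W q) (fun _ => 0) (K - 1) 0 1 m).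
Proof.
  intros HW Htw Hm.
  assert (Hb : forall k, Bc W q k <> 0).
  { intros k. unfold Bc. pose proof (Htw (q k) (q (k+1)%Z)). lra. }
  assert (J : forall m, (K <= m)%Z -> Jop (Ac W q) (Bc W q) (Cc W q) (jseq (Ac W q) (Bc W q) (Cc W q) (fun _ => 0) (K - 1) 0 1) m = 0).
  { intros m Hm'. exact (jseq_J _ _ _ (fun _ => 0) (K - 1) 0 1 Hb m ltac:(lia)). }
  split; auto. intros m Hm'.
  replace m with (K + Z.of_nat (Z.to_nat (m - K)))%Z by lia.
  apply (sturm (Ac W q) (Bc W q) (Cc W q)).
  - intros n. unfold Bc. apply Htw.
  - apply necessity_Q; auto.
  - apply jseq_0.
  - replace K with (K - 1 + 1)%Z at 2 by lia. apply jseq_1.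
  - exact J.
Qed.

Lemma chain2' f g1 g2 t d1 d2 u w : isC1 f ->
  derivable_pt_lim g1 t d1 -> derivable_pt_lim g2 t d2 -> g1 t = u -> g2 t = w ->
  derivable_pt_lim (fun s => f (g1 s) (g2 s)) t (pd1 f u w * d1 + pd2 f u w * d2).
Proof. intros Hf H1 H2 <- <-. apply chain2; auto. Qed.

Lemma lim_opp f t l : derivable_pt_lim f t l -> derivable_pt_lim (fun s => - f s) t (- l).
Proof. intros H. exact (derivable_pt_lim_opp f t l H). Qed.

Lemma C1_ex2 f : isC1 f -> forall a b, ex_derive (fun t => f a t) b.
Proof. intros [E _] a b. exact (proj2 (E a b)). Qed.
Lemma C1_ex1 f : isC1 f -> forall a b, ex_derive (fun t => f t b) a.
Proof. intros [E _] a b. exact (proj1 (E a b)). Qed.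

Lemma inv_deriv (Phi Psi : R * R -> R * R) (HPhiPsi : forall w, Phi (Psi w) = w)
  (HPhiC1a : isC1 (cp1 Phi)) (HPhiC1b : isC1 (cp2 Phi))
  (HPsiC1a : isC1 (cp1 Psi)) (HPsiC1b : isC1 (cp2 Psi)) w1 w2 :
  pd1 (cp1 Phi) (cp1 Psi w1 w2) (cp2 Psi w1 w2) * pd2 (cp1 Psi) w1 w2 +
  pd2 (cp1 Phi) (cp1 Psi w1 w2) (cp2 Psi w1 w2) * pd2 (cp2 Psi) w1 w2 = 0 /\
  pd1 (cp2 Phi) (cp1 Psi w1 w2) (cp2 Psi w1 w2) * pd2 (cp1 Psi) w1 w2 +
  pd2 (cp2 Phi) (cp1 Psi w1 w2) (cp2 Psi w1 w2) * pd2 (cp2 Psi) w1 w2 = 1.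
Proof.
  assert (E : forall t, Phi (cp1 Psi w1 t, cp2 Psi w1 t) = (w1, t)).
  { intros t. unfold cp1, cp2. rewrite <- surjective_pairing. apply HPhiPsi. }
  assert (D1 : derivable_pt_lim (fun t => cp1 Psi w1 t) w2 (pd2 (cp1 Psi) w1 w2))
    by (apply pd2_lim; apply C1_ex2; auto).
  assert (D2 : derivable_pt_lim (fun t => cp2 Psi w1 t) w2 (pd2 (cp2 Psi) w1 w2))
    by (apply pd2_lim; apply C1_ex2; auto).
  split.
  - apply (lim_unique_ext (fun t => cp1 Phi (cp1 Psi w1 t) (cp2 Psi w1 t)) (fun _ => w1) w2).
    + intros t. unfold cp1 at 1. rewrite E. reflexivity.
    + apply chain2; auto.
    + apply derivable_pt_lim_const.
  - apply (lim_unique_ext (fun t => cp2 Phi (cp1 Psi w1 t) (cp2 Psi w1 t)) (fun t => t) w2).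
    + intros t. unfold cp2 at 1. rewrite E. reflexivity.
    + apply chain2; auto.
    + apply derivable_pt_lim_id.
Qed.

Lemma lin_link (H G : R -> R -> R) (Phi : R * R -> R * R) (s : Z)
  (HPhiC1a : isC1 (cp1 Phi)) (HPhiC1b : isC1 (cp2 Phi)) (HC2 : isC2 H) (GC2 : isC2 G)
  (Link : forall a b,
     cp2 Phi a (- pd1 H a b) = - pd1 G (cp1 Phi a (- pd1 H a b)) (cp1 Phi b (pd2 H a b) + IZR s) /\
     cp2 Phi b (pd2 H a b) = pd2 G (cp1 Phi a (- pd1 H a b)) (cp1 Phi b (pd2 H a b) + IZR s))
  a b da db :
  let P1 := - pd1 H a b in let P2 := pd2 H a b in
  let dP1 := - (pd1 (pd1 H) a b * da + pd2 (pd1 H) a b * db) in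
  let dP2 := pd1 (pd2 H) a b * da + pd2 (pd2 H) a b * db in
  let xa := cp1 Phi a P1 in let xb := cp1 Phi b P2 + IZR s in
  let ka := pd1 (cp1 Phi) a P1 * da + pd2 (cp1 Phi) a P1 * dP1 in
  let kb := pd1 (cp1 Phi) b P2 * db + pd2 (cp1 Phi) b P2 * dP2 in
  pd1 (cp2 Phi) a P1 * da + pd2 (cp2 Phi) a P1 * dP1 =
    - (pd1 (pd1 G) xa xb * ka + pd2 (pd1 G) xa xb * kb) /\
  pd1 (cp2 Phi) b P2 * db + pd2 (cp2 Phi) b P2 * dP2 =
    pd1 (pd2 G) xa xb * ka + pd2 (pd2 G) xa xb * kb.
Proof.
  intros P1 P2 dP1 dP2 xa xb ka kb.
  set (A := fun t => a + t * da). set (B := fun t => b + t * db).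
  assert (A0 : A 0 = a) by (unfold A; ring). assert (B0 : B 0 = b) by (unfold B; ring).
  assert (DA : derivable_pt_lim A 0 da) by apply affine_lim.
  assert (DB : derivable_pt_lim B 0 db) by apply affine_lim.
  set (p1 := fun t => - pd1 H (A t) (B t)). set (p2 := fun t => pd2 H (A t) (B t)).
  assert (p10 : p1 0 = P1) by (unfold p1, P1; rewrite A0, B0; reflexivity).
  assert (p20 : p2 0 = P2) by (unfold p2, P2; rewrite A0, B0; reflexivity).
  assert (Dp1 : derivable_pt_lim p1 0 dP1).
  { unfold p1, dP1. apply lim_opp. apply chain2'; auto. apply isC2_C1_1; auto. }
  assert (Dp2 : derivable_pt_lim p2 0 dP2).
  { unfold p2, dP2. apply chain2'; auto. apply isC2_C1_2; auto. }
  set (Xa := fun t => cp1 Phi (A t) (p1 t)). set (Xb := fun t => cp1 Phi (B t) (p2 t) + IZR s).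
  assert (Xa0 : Xa 0 = xa) by (unfold Xa, xa; rewrite A0, p10; reflexivity).
  assert (Xb0 : Xb 0 = xb) by (unfold Xb, xb; rewrite B0, p20; reflexivity).
  assert (DXa : derivable_pt_lim Xa 0 ka) by (unfold Xa, ka; apply chain2'; auto).
  assert (DXb : derivable_pt_lim Xb 0 kb).
  { unfold Xb. eapply lim_eq. apply lim_plus. apply chain2'; eauto. apply derivable_pt_lim_const.
    unfold kb. ring. }
  split.
  - apply (lim_unique_ext (fun t => cp2 Phi (A t) (p1 t)) (fun t => - pd1 G (Xa t) (Xb t)) 0).
    + intros t. unfold p1, Xa, Xb, p1, p2. apply (Link (A t) (B t)).
    + apply chain2'; auto.
    + apply lim_opp. apply chain2'; auto. apply isC2_C1_1; auto.
  - apply (lim_unique_ext (fun t => cp2 Phi (B t) (p2 t)) (fun t => pd2 G (Xa t) (Xb t)) 0).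
    + intros t. unfold p1, Xa, Xb, p1, p2. apply (Link (A t) (B t)).
    + apply chain2'; auto.
    + apply chain2'; auto. apply isC2_C1_2; auto.
Qed.

Lemma alg2 A B C D d1 d2 : A * d1 + B * d2 = 0 -> C * d1 + D * d2 = 1 -> A * D - B * C = 1 ->
  A = d2 /\ B = - d1.
Proof.
  intros H1 H2 H3.
  assert (E1 : A * (C * d1 + D * d2) - d2 * (A * D - B * C) = C * (A * d1 + B * d2)) by ring.
  assert (E2 : B * (C * d1 + D * d2) + d1 * (A * D - B * C) = D * (A * d1 + B * d2)) by ring.
  rewrite H1, H2, H3 in E1, E2. split; lra.
Qed.

Lemma core (H G : R -> R -> R) (Phi Psi : R * R -> R * R) (s : Z)
  (HPsiPhi : forall z, Psi (Phi z) = z)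
  (HPhiPsi : forall w, Phi (Psi w) = w)
  (HPhiC1a : isC1 (cp1 Phi)) (HPhiC1b : isC1 (cp2 Phi))
  (HPsiC1a : isC1 (cp1 Psi)) (HPsiC1b : isC1 (cp2 Psi))
  (HPhi_sympl : forall q p,
     pd1 (cp1 Phi) q p * pd2 (cp2 Phi) q p - pd2 (cp1 Phi) q p * pd1 (cp2 Phi) q p = 1)
  (HC2 : isC2 H) (GC2 : isC2 G)
  (G_per : forall a b, G (a + 1) (b + 1) = G a b)
  (H_twist : forall a b, pd2 (pd1 H) a b > 0)
  (G_twist : forall a b, pd2 (pd1 G) a b > 0)
  (Link : forall a b,
     cp2 Phi a (- pd1 H a b) = - pd1 G (cp1 Phi a (- pd1 H a b)) (cp1 Phi b (pd2 H a b) + IZR s) /\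
     cp2 Phi b (pd2 H a b) = pd2 G (cp1 Phi a (- pd1 H a b)) (cp1 Phi b (pd2 H a b) + IZR s))
  (Hgeo : forall q : Z -> R, is_mconfig H q -> forall n j : Z,
     let z := (q n + IZR j, - pd1 H (q n + IZR j) (q (n + 1)%Z + IZR j)) in
     let w := Phi z in
     in_N H (q (n - 1)%Z + IZR j) (q n + IZR j) (q (n + 1)%Z + IZR j)
       (pd2 (cp1 Psi) (fst w) (snd w), pd2 (cp2 Psi) (fst w) (snd w)))
  (q : Z -> R) (Hq : is_mconfig H q) (n : Z) :
  swept G (Phi (q n, - pd1 H (q n) (q (n + 1)%Z))).
Proof.
  pose proof Hq as [Hc _].
  set (p := fun m => - pd1 H (q m) (q (m + 1)%Z)).
  assert (Hp2 : forall m, pd2 H (q m) (q (m + 1)%Z) = p (m + 1)%Z).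
  { intros m. pose proof (Hc (m + 1)%Z) as K. replace (m + 1 - 1)%Z with m in K by lia.
    unfold p. lra. }
  set (Xm := fun m => cp1 Phi (q m) (p m)).
  set (Ym := fun m => cp2 Phi (q m) (p m)).
  assert (LA : forall m, Ym m = - pd1 G (Xm m) (Xm (m + 1)%Z + IZR s)).
  { intros m. destruct (Link (q m) (q (m + 1)%Z)) as [K _]. rewrite Hp2 in K. exact K. }
  assert (LB : forall m, Ym (m + 1)%Z = pd2 G (Xm m) (Xm (m + 1)%Z + IZR s)).
  { intros m. destruct (Link (q m) (q (m + 1)%Z)) as [_ K]. rewrite Hp2 in K. exact K. }
  set (x := fun m => Xm m + IZR (m * s)).
  assert (shiftx : forall f, per1 f -> forall m, f (x m) (x (m + 1)%Z) = f (Xm m) (Xm (m + 1)%Z + IZR s)).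
  { intros f Pf m. apply (per_Z f Pf (m * s)); unfold x; [reflexivity|].
    rewrite !mult_IZR, plus_IZR. ring. }
  assert (PG : per1 G) by exact G_per.
  assert (PG1 : per1 (pd1 G)) by (apply per_pd1; auto; apply C1_ex1; apply isC2_C1; auto).
  assert (PG2 : per1 (pd2 G)) by (apply per_pd2; auto; apply C1_ex2; apply isC2_C1; auto).
  assert (PG11 : per1 (pd1 (pd1 G))) by (apply per_pd1; auto; apply C1_ex1; apply isC2_C1_1; auto).
  assert (PG12 : per1 (pd2 (pd1 G))) by (apply per_pd2; auto; apply C1_ex2; apply isC2_C1_1; auto).
  assert (PG22 : per1 (pd2 (pd2 G))) by (apply per_pd2; auto; apply C1_ex2; apply isC2_C1_2; auto).
  assert (Cx : is_config G x).
  { intros m. pose proof (shiftx _ PG2 (m - 1)%Z) as K1. replace (m - 1 + 1)%Z with m in K1 by lia.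
    rewrite K1, (shiftx _ PG1 m).
    pose proof (LB (m - 1)%Z) as K2. replace (m - 1 + 1)%Z with m in K2 by lia.
    rewrite <- K2. pose proof (LA m). lra. }
  assert (Mx : is_mconfig G x).
  { apply sufficiency; auto. intros M N HMN.
    set (K := (M - 1)%Z).
    destruct (mconfig_jac H q K HC2 H_twist Hq) as [JH EP].
    set (e := jseq (Ac H q) (Bc H q) (Cc H q) (fun _ => 0) (K - 1) 0 1) in JH, EP.
    set (dp := fun m => - (pd1 (pd1 H) (q m) (q (m + 1)%Z) * e m + pd2 (pd1 H) (q m) (q (m + 1)%Z) * e (m + 1)%Z)).
    set (xi := fun m => pd1 (cp1 Phi) (q m) (p m) * e m + pd2 (cp1 Phi) (q m) (p m) * dp m).
    set (eta := fun m => pd1 (cp2 Phi) (q m) (p m) * e m + pd2 (cp2 Phi) (q m) (p m) * dp m).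
    assert (DP2 : forall m, (K <= m + 1)%Z ->
       pd1 (pd2 H) (q m) (q (m + 1)%Z) * e m + pd2 (pd2 H) (q m) (q (m + 1)%Z) * e (m + 1)%Z = dp (m + 1)%Z).
    { intros m Hm. rewrite (schwarz_C2 H HC2). pose proof (JH (m + 1)%Z Hm) as J.
      unfold Jop, Ac, Bc, Cc in J. replace (m + 1 - 1)%Z with m in J by lia. unfold dp. lra. }
    assert (LL : forall m, (K <= m + 1)%Z ->
       eta m = - (pd1 (pd1 G) (Xm m) (Xm (m + 1)%Z + IZR s) * xi m + pd2 (pd1 G) (Xm m) (Xm (m + 1)%Z + IZR s) * xi (m + 1)%Z) /\
       eta (m + 1)%Z = pd2 (pd1 G) (Xm m) (Xm (m + 1)%Z + IZR s) * xi m + pd2 (pd2 G) (Xm m) (Xm (m + 1)%Z + IZR s) * xi (m + 1)%Z).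
    { intros m Hm.
      destruct (lin_link H G Phi s HPhiC1a HPhiC1b HC2 GC2 Link (q m) (q (m + 1)%Z) (e m) (e (m + 1)%Z)) as [I1 I2].
      cbv zeta in I1, I2. rewrite (DP2 m Hm), Hp2 in I1, I2. rewrite (schwarz_C2 G GC2) in I2.
      split; [exact I1|exact I2]. }
    assert (JG : forall m, (K <= m)%Z -> Jop (Ac G x) (Bc G x) (Cc G x) xi m = 0).
    { intros m Hm. unfold Jop, Ac, Bc, Cc.
      replace (m - 1 + 1)%Z with m by lia.
      pose proof (shiftx _ PG12 (m - 1)%Z) as S1. replace (m - 1 + 1)%Z with m in S1 by lia.
      pose proof (shiftx _ PG22 (m - 1)%Z) as S2. replace (m - 1 + 1)%Z with m in S2 by lia.
      rewrite S1, S2, (shiftx _ PG11 m), (shiftx _ PG12 m).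
      destruct (LL (m - 1)%Z ltac:(lia)) as [_ I2]. replace (m - 1 + 1)%Z with m in I2 by lia.
      destruct (LL m ltac:(lia)) as [I1 _].
      lra. }
    assert (XP : forall m, (M <= m)%Z -> 0 < xi m).
    { intros m Hm.
      set (d1 := pd2 (cp1 Psi) (Xm m) (Ym m)). set (d2 := pd2 (cp2 Psi) (Xm m) (Ym m)).
      assert (EPhi : Phi (q m, p m) = (Xm m, Ym m)) by (unfold Xm, Ym, cp1, cp2; apply surjective_pairing).
      assert (EPsi : Psi (Xm m, Ym m) = (q m, p m)) by (rewrite <- EPhi; apply HPsiPhi).
      assert (E1 : cp1 Psi (Xm m) (Ym m) = q m) by (unfold cp1; rewrite EPsi; reflexivity).
      assert (E2 : cp2 Psi (Xm m) (Ym m) = p m) by (unfold cp2; rewrite EPsi; reflexivity).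
      destruct (inv_deriv Phi Psi HPhiPsi HPhiC1a HPhiC1b HPsiC1a HPsiC1b (Xm m) (Ym m)) as [C1 C2].
      rewrite E1, E2 in C1, C2. fold d1 d2 in C1, C2.
      destruct (alg2 _ _ _ _ _ _ C1 C2 (HPhi_sympl (q m) (p m))) as [A1 A2].
      assert (Exi : xi m = d2 * e m - d1 * dp m) by (unfold xi; rewrite A1, A2; ring).
      pose proof (Hgeo q Hq m 0%Z) as G0. cbv zeta in G0. rewrite !Rplus_0_r in G0.
      assert (G1 : in_N H (q (m - 1)%Z) (q m) (q (m + 1)%Z) (d1, d2)) by exact G0.
      unfold in_N in G1. cbn [fst snd] in G1.
      pose proof (Rmax_l (- pd1 (pd1 H) (q m) (q (m + 1)%Z) * d1) (pd2 (pd2 H) (q (m - 1)%Z) (q m) * d1)) as R1.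
      pose proof (Rmax_r (- pd1 (pd1 H) (q m) (q (m + 1)%Z) * d1) (pd2 (pd2 H) (q (m - 1)%Z) (q m) * d1)) as R2.
      assert (e0 : 0 < e m) by (apply EP; unfold K; lia).
      assert (e1 : 0 < e (m + 1)%Z) by (apply EP; unfold K; lia).
      assert (em : 0 < e (m - 1)%Z) by (apply EP; unfold K; lia).
      pose proof (H_twist (q m) (q (m + 1)%Z)) as T1.
      pose proof (H_twist (q (m - 1)%Z) (q m)) as T2.
      pose proof (JH m ltac:(unfold K; lia)) as J. unfold Jop, Ac, Bc, Cc in J.
      replace (m - 1 + 1)%Z with m in J by lia.
      rewrite Exi. unfold dp.
      destruct (Rle_or_lt 0 d1) as [Hd|Hd].
      - assert (0 <= pd2 (pd1 H) (q m) (q (m + 1)%Z) * d1 * e (m + 1)%Z).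
        { apply Rmult_le_pos; [apply Rmult_le_pos|]; lra. }
        assert (0 < (d2 + pd1 (pd1 H) (q m) (q (m + 1)%Z) * d1) * e m) by (apply Rmult_lt_0_compat; lra).
        nra.
      - assert (0 < pd2 (pd1 H) (q (m - 1)%Z) (q m) * (- d1) * e (m - 1)%Z).
        { apply Rmult_lt_0_compat; [apply Rmult_lt_0_compat|]; lra. }
        assert (0 < (d2 - pd2 (pd2 H) (q (m - 1)%Z) (q m) * d1) * e m) by (apply Rmult_lt_0_compat; lra).
        nra. }
    exists xi. split.
    - intros k Hk. apply XP. lia.
    - intros m Hm. apply JG. unfold K. lia. }
  exists x. split; [exact Mx|]. exists n, (- (n * s))%Z.
  rewrite (surjective_pairing (Phi _)).
  change (fst (Phi (q n, - pd1 H (q n) (q (n + 1)%Z)))) with (Xm n).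
  change (snd (Phi (q n, - pd1 H (q n) (q (n + 1)%Z)))) with (Ym n).
  assert (Ex1 : x n + IZR (- (n * s)) = Xm n) by (unfold x; rewrite opp_IZR; ring).
  assert (Ex2 : x (n + 1)%Z + IZR (- (n * s)) = Xm (n + 1)%Z + IZR s).
  { unfold x. rewrite opp_IZR, !mult_IZR, plus_IZR. ring. }
  rewrite Ex1, Ex2, LA. reflexivity.
Qed.

Lemma swept_norm W z : isC2 W -> per1 W -> swept W z ->
  exists q, is_mconfig W q /\ exists n, z = (q n, - pd1 W (q n) (q (n + 1)%Z)).
Proof.
  intros HW PW [q [[Hc Hm] [n [j Ez]]]].
  assert (P1 : per1 (pd1 W)) by (apply per_pd1; auto; apply C1_ex1; apply isC2_C1; auto).
  assert (P2 : per1 (pd2 W)) by (apply per_pd2; auto; apply C1_ex2; apply isC2_C1; auto).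
  set (q' := fun m => q m + IZR j).
  assert (Eact : forall y M L, action W (fun m => y m + IZR j) M L = action W y M L).
  { intros y M L. rewrite !action_sumZ. apply sumZ_ext. intros. apply (per_Z W PW j); reflexivity. }
  exists q'. split.
  - split.
    + intros m. unfold q'. rewrite (per_Z (pd2 W) P2 j (q (m - 1)%Z) (q m)) by reflexivity.
      rewrite (per_Z (pd1 W) P1 j (q m) (q (m + 1)%Z)) by reflexivity. apply Hc.
    + intros M N HMN. destruct (Hm M N HMN) as [eps [He K]]. exists eps. split; auto.
      intros x XM XN Xc.
      assert (Ex : x = (fun m => (x m - IZR j) + IZR j)) by (apply functional_extensionality; intros; ring).
      rewrite Ex. unfold q'. rewrite !Eact. apply K.
      * unfold q' in XM. rewrite XM. ring.
      * unfold q' in XN. rewrite XN. ring.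
      * intros k Hk. replace (x k - IZR j - q k) with (x k - q' k) by (unfold q'; ring). apply Xc; auto.
  - exists n. exact Ez.
Qed.

Lemma Phi_perZ (Phi : R * R -> R * R)
  (HPhi_per : forall q p, Phi (q + 1, p) = (fst (Phi (q, p)) + 1, snd (Phi (q, p)))) :
  forall m a p, Phi (a + IZR m, p) = (fst (Phi (a, p)) + IZR m, snd (Phi (a, p))).
Proof.
  assert (N : forall (n : nat) a p, Phi (a + INR n, p) = (fst (Phi (a, p)) + INR n, snd (Phi (a, p)))).
  { induction n as [|n IH]; intros a p.
    - simpl. rewrite !Rplus_0_r. apply surjective_pairing.
    - rewrite S_INR. replace (a + (INR n + 1)) with ((a + INR n) + 1) by ring.
      rewrite HPhi_per, IH. cbn [fst snd]. rewrite Rplus_assoc. reflexivity. }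
  intros m a p. destruct (Z_le_gt_dec 0 m) as [Hm|Hm].
  - rewrite <- (Z2Nat.id m Hm), <- INR_IZR_INZ. apply N.
  - pose proof (N (Z.to_nat (- m)) (a + IZR m) p) as K.
    rewrite INR_IZR_INZ, Z2Nat.id in K by lia. rewrite opp_IZR in K.
    replace (a + IZR m + - IZR m) with a in K by ring.
    rewrite K. cbn [fst snd]. transitivity (fst (Phi (a + IZR m, p)), snd (Phi (a + IZR m, p))). apply surjective_pairing. f_equal. ring.
Qed.

Lemma inv_deriv1 (Phi Psi : R * R -> R * R) (HPhiPsi : forall w, Phi (Psi w) = w)
  (HPhiC1a : isC1 (cp1 Phi)) (HPhiC1b : isC1 (cp2 Phi))
  (HPsiC1a : isC1 (cp1 Psi)) (HPsiC1b : isC1 (cp2 Psi)) w1 w2 :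
  pd1 (cp1 Phi) (cp1 Psi w1 w2) (cp2 Psi w1 w2) * pd1 (cp1 Psi) w1 w2 +
  pd2 (cp1 Phi) (cp1 Psi w1 w2) (cp2 Psi w1 w2) * pd1 (cp2 Psi) w1 w2 = 1 /\
  pd1 (cp2 Phi) (cp1 Psi w1 w2) (cp2 Psi w1 w2) * pd1 (cp1 Psi) w1 w2 +
  pd2 (cp2 Phi) (cp1 Psi w1 w2) (cp2 Psi w1 w2) * pd1 (cp2 Psi) w1 w2 = 0.
Proof.
  assert (E : forall t, Phi (cp1 Psi t w2, cp2 Psi t w2) = (t, w2)).
  { intros t. unfold cp1, cp2. rewrite <- surjective_pairing. apply HPhiPsi. }
  assert (D1 : derivable_pt_lim (fun t => cp1 Psi t w2) w1 (pd1 (cp1 Psi) w1 w2))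
    by (apply pd1_lim; apply C1_ex1; auto).
  assert (D2 : derivable_pt_lim (fun t => cp2 Psi t w2) w1 (pd1 (cp2 Psi) w1 w2))
    by (apply pd1_lim; apply C1_ex1; auto).
  split.
  - apply (lim_unique_ext (fun t => cp1 Phi (cp1 Psi t w2) (cp2 Psi t w2)) (fun t => t) w1).
    + intros t. unfold cp1 at 1. rewrite E. reflexivity.
    + apply (chain2 (cp1 Phi) (fun t => cp1 Psi t w2) (fun t => cp2 Psi t w2)); auto.
    + apply derivable_pt_lim_id.
  - apply (lim_unique_ext (fun t => cp2 Phi (cp1 Psi t w2) (cp2 Psi t w2)) (fun _ => w2) w1).
    + intros t. unfold cp2 at 1. rewrite E. reflexivity.
    + apply (chain2 (cp2 Phi) (fun t => cp1 Psi t w2) (fun t => cp2 Psi t w2)); auto.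
    + apply derivable_pt_lim_const.
Qed.

Lemma Psi_sympl (Phi Psi : R * R -> R * R) (HPhiPsi : forall w, Phi (Psi w) = w)
  (HPhiC1a : isC1 (cp1 Phi)) (HPhiC1b : isC1 (cp2 Phi))
  (HPsiC1a : isC1 (cp1 Psi)) (HPsiC1b : isC1 (cp2 Psi))
  (HPhi_sympl : forall q p,
     pd1 (cp1 Phi) q p * pd2 (cp2 Phi) q p - pd2 (cp1 Phi) q p * pd1 (cp2 Phi) q p = 1) :
  forall w1 w2, pd1 (cp1 Psi) w1 w2 * pd2 (cp2 Psi) w1 w2 - pd2 (cp1 Psi) w1 w2 * pd1 (cp2 Psi) w1 w2 = 1.
Proof.
  intros w1 w2.
  destruct (inv_deriv1 Phi Psi HPhiPsi HPhiC1a HPhiC1b HPsiC1a HPsiC1b w1 w2) as [A1 A2].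
  destruct (inv_deriv Phi Psi HPhiPsi HPhiC1a HPhiC1b HPsiC1a HPsiC1b w1 w2) as [B1 B2].
  pose proof (HPhi_sympl (cp1 Psi w1 w2) (cp2 Psi w1 w2)) as S.
  set (a := pd1 (cp1 Phi) (cp1 Psi w1 w2) (cp2 Psi w1 w2)) in *.
  set (b := pd2 (cp1 Phi) (cp1 Psi w1 w2) (cp2 Psi w1 w2)) in *.
  set (c := pd1 (cp2 Phi) (cp1 Psi w1 w2) (cp2 Psi w1 w2)) in *.
  set (d := pd2 (cp2 Phi) (cp1 Psi w1 w2) (cp2 Psi w1 w2)) in *.
  set (e := pd1 (cp1 Psi) w1 w2) in *. set (f := pd2 (cp1 Psi) w1 w2) in *.
  set (g := pd1 (cp2 Psi) w1 w2) in *. set (h := pd2 (cp2 Psi) w1 w2) in *.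
  assert (I : (a * d - b * c) * (e * h - f * g) = (a * e + b * g) * (c * f + d * h) - (a * f + b * h) * (c * e + d * g)) by ring.
  rewrite S, A1, A2, B1, B2 in I. lra.
Qed.

Theorem theorem1p2
  (H G : R -> R -> R)
  (Phi Psi : R * R -> R * R)   (* (q,p) |-> (x,y) and its inverse, on lifts *)
  (F : R * R -> R * R)         (* lift of T in (q,p) coordinates *)
  (k : Z)                      (* lift of T in (x,y) coords is Phi o F o Psi + (k,0) *)
  (* symplectic change of coordinates of the annulus, lifted *)
  (HPsiPhi : forall z, Psi (Phi z) = z)
  (HPhiPsi : forall w, Phi (Psi w) = w)
  (HPhiC1a : isC1 (cp1 Phi)) (HPhiC1b : isC1 (cp2 Phi))
  (HPsiC1a : isC1 (cp1 Psi)) (HPsiC1b : isC1 (cp2 Psi))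
  (HPhi_per : forall q p, Phi (q + 1, p) = (fst (Phi (q, p)) + 1, snd (Phi (q, p))))
  (HPhi_sympl : forall q p,
     pd1 (cp1 Phi) q p * pd2 (cp2 Phi) q p - pd2 (cp1 Phi) q p * pd1 (cp2 Phi) q p = 1)
  (* generating functions *)
  (HC2 : isC2 H) (GC2 : isC2 G)
  (H_per : forall a b, H (a + 1) (b + 1) = H a b)
  (G_per : forall a b, G (a + 1) (b + 1) = G a b)
  (H_twist : forall a b, pd2 (pd1 H) a b > 0)
  (G_twist : forall a b, pd2 (pd1 G) a b > 0)
  (HgenH : forall q p q' p',
     F (q, p) = (q', p') <-> (p = - pd1 H q q' /\ p' = pd2 H q q'))
  (HgenG : forall z z',
     F z = z' <->
     (snd (Phi z) = - pd1 G (fst (Phi z)) (fst (Phi z') + IZR k) /\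
      snd (Phi z') = pd2 G (fst (Phi z)) (fst (Phi z') + IZR k)))
  (* geometric assumption, part 1: d/dy lies in N_H on M_H *)
  (Hgeo_H : forall q : Z -> R, is_mconfig H q -> forall n j : Z,
     let z := (q n + IZR j, - pd1 H (q n + IZR j) (q (n + 1)%Z + IZR j)) in
     let w := Phi z in
     in_N H (q (n - 1)%Z + IZR j) (q n + IZR j) (q (n + 1)%Z + IZR j)
       (pd2 (cp1 Psi) (fst w) (snd w), pd2 (cp2 Psi) (fst w) (snd w)))
  (* geometric assumption, part 2: d/dp lies in N_G on M_G *)
  (Hgeo_G : forall x : Z -> R, is_mconfig G x -> forall n j : Z,
     let w := (x n + IZR j, - pd1 G (x n + IZR j) (x (n + 1)%Z + IZR j)) in
     let z := Psi w in
     in_N G (x (n - 1)%Z + IZR j) (x n + IZR j) (x (n + 1)%Z + IZR j)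
       (pd2 (cp1 Phi) (fst z) (snd z), pd2 (cp2 Phi) (fst z) (snd z))) :
  forall z : R * R, swept H z <-> swept G (Phi z).
Proof.
  assert (HPsi_sympl := Psi_sympl Phi Psi HPhiPsi HPhiC1a HPhiC1b HPsiC1a HPsiC1b HPhi_sympl).
  assert (PH : per1 H) by exact H_per.
  assert (PG : per1 G) by exact G_per.
  assert (LinkF : forall a b,
     cp2 Phi a (- pd1 H a b) = - pd1 G (cp1 Phi a (- pd1 H a b)) (cp1 Phi b (pd2 H a b) + IZR k) /\
     cp2 Phi b (pd2 H a b) = pd2 G (cp1 Phi a (- pd1 H a b)) (cp1 Phi b (pd2 H a b) + IZR k)).
  { intros a b. assert (Fz : F (a, - pd1 H a b) = (b, pd2 H a b)).
    { apply HgenH. split; reflexivity. }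
    apply HgenG in Fz. exact Fz. }
  assert (Psi_per : forall m x y, Psi (x + IZR m, y) = (fst (Psi (x, y)) + IZR m, snd (Psi (x, y)))).
  { intros m x y. rewrite <- (HPsiPhi (fst (Psi (x, y)) + IZR m, snd (Psi (x, y)))).
    f_equal. rewrite (Phi_perZ Phi HPhi_per). rewrite <- surjective_pairing, HPhiPsi. reflexivity. }
  assert (LinkB : forall a b,
     cp2 Psi a (- pd1 G a b) = - pd1 H (cp1 Psi a (- pd1 G a b)) (cp1 Psi b (pd2 G a b) + IZR (- k)) /\
     cp2 Psi b (pd2 G a b) = pd2 H (cp1 Psi a (- pd1 G a b)) (cp1 Psi b (pd2 G a b) + IZR (- k))).
  { intros a b.
    set (z := Psi (a, - pd1 G a b)).
    set (z' := (cp1 Psi b (pd2 G a b) + IZR (- k), cp2 Psi b (pd2 G a b))).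
    assert (Ez' : z' = Psi (b + IZR (- k), pd2 G a b)) by (rewrite Psi_per; reflexivity).
    assert (Pz : Phi z = (a, - pd1 G a b)) by apply HPhiPsi.
    assert (Pz' : Phi z' = (b + IZR (- k), pd2 G a b)) by (rewrite Ez'; apply HPhiPsi).
    assert (Fz : F z = z').
    { apply HgenG. rewrite Pz, Pz'. cbn [fst snd].
      replace (b + IZR (- k) + IZR k) with b by (rewrite opp_IZR; ring). split; reflexivity. }
    rewrite (surjective_pairing z) in Fz. unfold z' in Fz.
    apply HgenH in Fz. exact Fz. }
  intros z. split.
  - intros Hs. destruct (swept_norm H z HC2 PH Hs) as [q [Hq [n ->]]].
    exact (core H G Phi Psi k HPsiPhi HPhiPsi HPhiC1a HPhiC1b HPsiC1a HPsiC1b HPhi_sympl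
             HC2 GC2 G_per H_twist G_twist LinkF Hgeo_H q Hq n).
  - intros Hs. destruct (swept_norm G (Phi z) GC2 PG Hs) as [x [Hx [n En]]].
    pose proof (core G H Psi Phi (- k) HPhiPsi HPsiPhi HPsiC1a HPsiC1b HPhiC1a HPhiC1b HPsi_sympl
             GC2 HC2 H_per G_twist H_twist LinkB Hgeo_G x Hx n) as C.
    rewrite <- En, HPsiPhi in C. exact C.
Qed.
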